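(* Let $K$ be a finite field of characteristic $p$ and order $q$, let $s$ be a positive integer with $\gcd(s,q-1)=1$, and let $\tau$ be the permutation of $\mathcal{W}_{K,s}$ defined below. If $p=2$, the cycle type of $\tau$ consists of $|\mathcal{W}_{K,s}|$ instances of $1$. If $p$ is odd, the cycle type of $\tau$ contains no number larger than $(p-1)/2$.
   Context: $\zeta=\exp(2\pi i/p)$, $\psi(x)=\zeta^{\mathrm{Tr}(x)}$ with $\mathrm{Tr}$ the absolute trace of $K$ to $\mathbb{F}_p$; $W_u=\sum_{x\in K}\psi(x^s-ux)$; $\mathcal{W}_{K,s}=\{W_u:u\in K^\times\}$. Let $\gamma$ be a primitive element of $\mathbb{F}_p$ and $\sigma\in\mathrm{Gal}(\mathbb{Q}(\zeta)/\mathbb{Q})$ with $\sigma(\zeta)=\zeta^\gamma$; it is known that $\sigma(W_u)=W_{\gamma^{1-1/s}u}$ (with $1/s$ the inverse of $s$ mod $p-1$), so $\sigma$ restricts to a permutation $\tau$ of $\mathcal{W}_{K,s}$. The cycle type of a permutation is the multiset of lengths of the cycles in its decomposition into disjoint cycles. *)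

(* Defs.v *)
From HB Require Import structures.
From mathcomp Require Import all_boot all_order all_algebra all_field.
Set Implicit Arguments. Unset Strict Implicit. Unset Printing Implicit Defensive.
Import GRing.Theory Num.Theory.
Local Open Scope ring_scope.

(* zeta = exp(2 pi i / p): (p.-root (-1)) is the p-th root of -1 of minimal
   nonnegative argument, i.e. exp(i pi / p); its square is exp(2 pi i / p). *)
Definition zeta (p : nat) : algC := (p.-root (-1)) ^+ 2.

(* absolute trace K -> F_p (valued in the prime subfield of K), q = p ^ n *)
Definition absTr (K : finFieldType) (p : nat) (x : K) : K :=
  \sum_(i < logn p #|K|) x ^+ (p ^ i).

Definition trn (K : finFieldType) (p : nat) (x : K) : nat :=
  odflt ord0 [pick k : 'I_p.+1 | (k < p)%N && ((k%:R : K) == absTr p x)].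

Definition psi (K : finFieldType) (p : nat) (x : K) : algC :=
  zeta p ^+ trn p x.

Definition Wu (K : finFieldType) (p s : nat) (u : K) : algC :=
  \sum_(x : K) psi p (x ^+ s - u * x).

Definition Wlist (K : finFieldType) (p s : nat) : seq algC :=
  undup [seq Wu p s u | u <- enum K & u != 0].

Definition Wtype (K : finFieldType) (p s : nat) : finType :=
  seq_sub (Wlist K p s).

(* tau : restriction of sigma to W_{K,s} (identity fallback off W, never used
   since sigma maps W_{K,s} into itself) *)
Definition tau (K : finFieldType) (p s : nat) (sigma : {rmorphism algC -> algC})
  (w : Wtype K p s) : Wtype K p s := insubd w (sigma (val w)).

(* cycle type of f : T -> T (T finite): the lengths of its cycles, one entry
   per cycle (cycles represented by their roots) *)
Definition cycle_type (T : finType) (f : T -> T) : seq nat :=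
  [seq order f x | x <- enum (froots f)].

(* Main.v *)
Require Import Defs.
From HB Require Import structures.
From mathcomp Require Import all_boot all_order all_algebra all_field.
From mathcomp Require Import ring.
Import GRing.Theory Num.Theory.
Local Open Scope ring_scope.
Lemma zeta_p (p : nat) : (0 < p)%N -> zeta p ^+ p = 1.
Proof.
move=> p0; rewrite /zeta exprAC rootCK //; by rewrite sqrrN expr1n.
Qed.

Lemma natX_frob (K : finFieldType) (p : nat) (n i : nat) :
  p \in [pchar K] -> (n%:R : K) ^+ (p ^ i) = n%:R.
Proof.
move=> pch; elim: i => [|i IH]; first by rewrite expn0 expr1.
by rewrite expnSr exprM IH -(pFrobenius_autE pch) rmorph_nat.
Qed.

Lemma absTr_scale (K : finFieldType) (p : nat) (n : nat) (y : K) :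
  p \in [pchar K] -> absTr p (n%:R * y) = n%:R * absTr p y.
Proof.
move=> pch; rewrite /absTr mulr_sumr; apply: eq_bigr => i _.
by rewrite exprMn natX_frob.
Qed.

Lemma nat_inj_lt (K : finFieldType) (p j1 j2 : nat) :
  p \in [pchar K] -> (j1 < p)%N -> (j2 < p)%N -> (j1%:R : K) = j2%:R -> j1 = j2.
Proof.
move=> pch h1 h2 e.
wlog le12 : j1 j2 h1 h2 e / (j1 <= j2)%N.
  move=> W; case: (leqP j1 j2) => h; first exact: W.
  by symmetry; apply: W => //; apply: ltnW.
have : (p %| j2 - j1)%N by rewrite (dvdn_pcharf pch) natrB // e subrr.
have [h0|pos] := posnP (j2 - j1)%N.
  by move=> _; apply/eqP; rewrite eqn_leq le12 -subn_eq0 h0.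
move=> /(dvdn_leq pos); rewrite leqNgt => /negP; case.
by apply: leq_ltn_trans h2; apply: leq_subr.
Qed.

Lemma trn_scale (K : finFieldType) (p n k : nat) (y : K) :
  p \in [pchar K] -> (k < p)%N -> k%:R = absTr p y ->
  trn p (n%:R * y) = ((n * k) %% p)%N.
Proof.
move=> pch kp hk; have p0 : (0 < p)%N by rewrite prime_gt0 // (pcharf_prime pch).
have e : absTr p (n%:R * y) = ((n * k) %% p)%N%:R.
  by rewrite absTr_scale // -hk -natrM (GRing.natr_mod_pchar pch).
rewrite /trn; case: pickP => [j /andP[jp /eqP hj] | none] /=.
  by apply: (@nat_inj_lt K p _ _ pch) => //; [rewrite ltn_mod | rewrite hj e].
have := none (inord ((n * k) %% p)); rewrite /= inordK ?e ?eqxx ?andbT ?ltn_mod ?p0 //.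
by apply: ltnW; rewrite ltnS ltn_mod.
Qed.
Lemma psi_scale (K : finFieldType) (p gamma : nat) (sigma : {rmorphism algC -> algC}) (y : K) :
  p \in [pchar K] -> sigma (zeta p) = zeta p ^+ gamma ->
  (gamma ^ p.-1)%:R = 1 :> K ->
  psi p (gamma%:R * y) = sigma (psi p y).
Proof.
move=> pch sz g1.
have pr := pcharf_prime pch; have p0 := prime_gt0 pr; have p1 := prime_gt1 pr.
rewrite /psi rmorphXn sz [in RHS]/trn.
case: pickP => [k /andP[kp /eqP hk] | none] /=.
  by rewrite (@trn_scale K p gamma k y pch kp hk) (expr_mod _ (zeta_p p p0)) exprM.
rewrite expr0 /trn; case: pickP => [j /andP[jp /eqP hj] | _] /=; last first.
  by rewrite expr0.
have ey : y = (gamma ^ p.-2)%:R * (gamma%:R * y).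
  have e2 : (p.-2).+1 = p.-1 by clear -p1; case: p p1 => [|[|q]].
  by rewrite mulrA -natrM -expnSr e2 g1 mul1r.
have := none (inord (((gamma ^ p.-2) * j) %% p)).
rewrite /= inordK; last by apply: ltnW; rewrite ltnS ltn_mod.
rewrite ltn_mod p0 /= ey absTr_scale // -hj -natrM (GRing.natr_mod_pchar pch).
by rewrite eqxx.
Qed.
Lemma W_shift (K : finFieldType) (p s gamma : nat) (sigma : {rmorphism algC -> algC}) (c u : K) :
  p \in [pchar K] -> sigma (zeta p) = zeta p ^+ gamma ->
  (gamma ^ p.-1)%:R = 1 :> K -> c != 0 -> gamma%:R * c ^+ s = 1 ->
  sigma (Wu p s u) = Wu p s (gamma%:R * c * u).
Proof.
move=> pch sz g1 cnz gc.
rewrite /Wu rmorph_sum.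
under eq_bigr => x _ do rewrite -(@psi_scale K p gamma sigma _ pch sz g1).
rewrite (reindex_inj (mulfI cnz)) /=; apply: eq_bigr => x _; congr psi.
rewrite exprMn mulrBr mulrA gc mul1r; congr (_ - _).
by ring.
Qed.
Lemma order_le_iter (T : finType) (f : T -> T) (x : T) (m : nat) :
  (0 < m)%N -> iter m f x = x -> (order f x <= m)%N.
Proof.
move=> m0 hm; rewrite /order.
apply: (@leq_trans #|traject f x m|); last first.
  by rewrite -[X in (_ <= X)%N](size_traject f x m) card_size.
apply/subset_leq_card/subsetP => y; rewrite inE => hy.
rewrite -(iter_findex hy); apply/loopingP.
by rewrite /looping hm; case: m m0 {hm} => // m _; rewrite mem_head.
Qed.

Lemma map_const_nseq (T : Type) (s : seq T) (k : nat) :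
  [seq k | _ <- s] = nseq (size s) k.
Proof. by elim: s => //= x s ->. Qed.

Theorem lemma2p4 (K : finFieldType) (p s gamma : nat)
  (sigma : {rmorphism algC -> algC}) :
  p \in [pchar K] ->
  (0 < s)%N ->
  coprime s #|K|.-1 ->
  p.-1.-primitive_root (gamma%:R : 'F_p) ->
  sigma (zeta p) = zeta p ^+ gamma ->
  (p = 2%N -> perm_eq (cycle_type (@tau K p s sigma))
                      (nseq #|@Wtype K p s| 1%N)) /\
  (odd p -> all (fun k => (k <= p.-1./2)%N) (cycle_type (@tau K p s sigma))).
Proof.
move=> pch s0 cop prim sz.
have pr := pcharf_prime pch; have p0 := prime_gt0 pr; have p1 := prime_gt1 pr.
have pm0 : (0 < p.-1)%N by rewrite -subn1 subn_gt0.
have gF : (gamma%:R : 'F_p) != 0.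
  apply/eqP => e; have := prim_expr_order prim; rewrite e expr0n.
  by case: (p.-1) pm0 => // n _ /eqP; rewrite eq_sym oner_eq0.
have gK : (gamma%:R : K) != 0.
  by rewrite -(dvdn_pcharf pch) (dvdn_pcharf (pchar_Fp pr)).
set g : K := gamma%:R.
have gp1 : g ^+ p.-1 = 1.
  apply: (mulIf gK); rewrite mul1r -exprSr prednK //.
  by have := @natX_frob K p gamma 1 pch; rewrite expn1.
have g1 : (gamma ^ p.-1)%:R = 1 :> K by rewrite natrX.
set q := #|K|.
have q1 : (1 < q)%N := finNzRing_gt1 K.
have q0 : (0 < q.-1)%N by rewrite -subn1 subn_gt0.
have gq : g ^+ q.-1 = 1.
  by apply: (mulIf gK); rewrite mul1r -exprSr prednK ?expf_card // ltnW.
have [a _ ha] := Bezoutl s q0.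
have cop' : gcdn q.-1 s = 1%N by rewrite gcdnC; apply/eqP.
rewrite cop' in ha.
set c := g ^+ a.
have cnz : c != 0 by rewrite expf_neq0.
have gc : g * c ^+ s = 1.
  rewrite -exprM -exprS; have [k hk] := dvdnP ha.
  by rewrite -add1n hk mulnC exprM gq expr1n.
set d := g * c.
have dnz : d != 0 by rewrite mulf_neq0.
have shift (u : K) : sigma (Wu p s u) = Wu p s (d * u).
  exact: (@W_shift K p s gamma sigma c u pch sz g1 cnz gc).
set tt := @tau K p s sigma.
have wval (w : Wtype K p s) : exists2 u : K, u != 0 & val w = Wu p s u.
  have := valP w; rewrite mem_undup => /mapP [u].
  by rewrite mem_filter => /andP[unz _] ->; exists u.
have tau_val (w : Wtype K p s) (u : K) : u != 0 -> val w = Wu p s u ->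
    val (tt w) = Wu p s (d * u).
  move=> unz hw; rewrite /tt /tau insubdK hw shift //.
  rewrite mem_undup; apply/mapP; exists (d * u) => //.
  by rewrite mem_filter mulf_neq0 // mem_enum.
have iter_val (k : nat) (w : Wtype K p s) (u : K) : u != 0 -> val w = Wu p s u ->
    val (iter k tt w) = Wu p s (d ^+ k * u).
  move=> unz hw; elim: k => [|k IH]; first by rewrite expr0 mul1r.
  rewrite iterS (tau_val _ (d ^+ k * u)) ?mulf_neq0 ?expf_neq0 //.
  by rewrite mulrA -exprS.
have fixm m : d ^+ m = 1 -> forall w, iter m tt w = w.
  move=> hm w; have [u unz hw] := wval w; apply: val_inj.
  by rewrite (iter_val _ _ u) // hm mul1r.
split.
  move=> p2.
  have d1 : d = 1.
    have g1' : g = 1 by move: gp1; rewrite p2 expr1.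
    by rewrite /d /c g1' expr1n mulr1.
  have tid : tt =1 id.
    have e1 : d ^+ 1 = 1 by rewrite d1 expr1.
    by move=> w; exact: (fixm 1%N e1 w).
  rewrite /cycle_type.
  rewrite (eq_map (fun x => eq_card (eq_fconnect tid x))).
  rewrite (eq_map (@order_id _)) map_const_nseq.
  rewrite (eq_enum (eq_froots tid)).
  suff -> : enum (froots (@id (Wtype K p s))) = enum (Wtype K p s).
    by rewrite -cardE.
  by apply: eq_enum => x; rewrite !inE froots_id.
move=> oddp.
have oddq : odd q by rewrite /q (card_pprimeChar pch) oddX oddp orbT.
have even_q1 : (2 %| q.-1)%N.
  by rewrite dvdn2 -oddS prednK // ltnW.
have oddas : odd (a * s).
  have : (2 %| (1 + a * s))%N by apply: dvdn_trans even_q1 ha.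
  by rewrite dvdn2 add1n oddS negbK.
have odda : odd a by move: oddas; rewrite oddM => /andP[].
have dm : d ^+ p.-1./2 = 1.
  rewrite /d /c -exprS.
  have ea : a.+1 = (a.+1./2 * 2)%N.
    by have := odd_double_half a.+1; rewrite oddS odda /= add0n -muln2.
  have ep : p.-1 = (p.-1./2 * 2)%N.
    have op : odd p.-1 = false by apply/negbTE; rewrite -oddS prednK.
    by have := odd_double_half p.-1; rewrite op add0n -muln2.
  by rewrite ea -exprM mulnAC -mulnA -ep mulnC exprM gp1 expr1n.
have m0 : (0 < p.-1./2)%N.
  by clear -p1 oddp; case: p p1 oddp => [|[|[|n]]].
rewrite all_map; apply/allP => x _ /=.
by apply: order_le_iter => //; apply: fixm.
Qed.
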